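(* Let $n\ge 1$ and let $\mathbf{P_0},\mathbf{P_1}$ be $n\times n$ transition probability matrices of irreducible and aperiodic time-homogeneous discrete-time Markov chains on $n$ states. For $t\in[0,1]$ put $\mathbf{P_t}=(1-t)\mathbf{P_0}+t\mathbf{P_1}$ and let $\pi_t$ be the unique stationary distribution of $\mathbf{P_t}$. Then, as functions of $\epsilon>0$, $$t_{sad}(\mathbf{P_0},\mathbf{P_1},\epsilon)=O\!\left(\frac{t_{mix}^4(\epsilon/2)}{\epsilon^3}\right),$$ where $t_{sad}$ and $t_{mix}(\cdot)$ are as defined in the context.
   Context: Distributions are row vectors; $\|\mu-\nu\|_{TV}=\frac12\|\mu-\nu\|_1$ is the total variation distance. For an irreducible aperiodic transition matrix $\mathbf{P}$ with stationary distribution $\pi$, the mixing time is $t_{mix}(\mathbf{P},\epsilon)=\inf\{T\in\mathbb{N}: \|\nu\mathbf{P}^T-\pi\|_{TV}\le\epsilon \text{ for all distributions }\nu\}$. Set $t_{mix}(\epsilon)=\sup_{s\in[0,1]} t_{mix}(\mathbf{P_s},\epsilon)$. The stable adiabatic time is $$t_{sad}(\mathbf{P_0},\mathbf{P_1},\epsilon)=\inf\{T\in\mathbb{N}: \|\pi_0\mathbf{P_{1/T}}\mathbf{P_{2/T}}\cdots\mathbf{P_{k/T}}-\pi_{k/T}\|_{TV}<\epsilon \text{ for all } 1\le k\le T\}.$$ *)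

(* Defs.v *)
From HB Require Import structures.
From mathcomp Require Import all_boot all_order all_algebra.
From mathcomp Require Import all_classical all_reals.
From mathcomp Require Import ereal.
Set Implicit Arguments. Unset Strict Implicit. Unset Printing Implicit Defensive.
Import Order.TTheory GRing.Theory Num.Theory.
Local Open Scope ring_scope.
Local Open Scope classical_set_scope.

Section MarkovDefs.
Variable R : realType.
Variable n : nat.
(* State space {0,...,n}, i.e. n.+1 >= 1 states. *)

Definition is_distribution (mu : 'rV[R]_n.+1) : Prop :=
  (forall i, 0 <= mu 0 i) /\ \sum_i mu 0 i = 1.

Definition is_transition (P : 'M[R]_n.+1) : Prop :=
  (forall i j, 0 <= P i j) /\ (forall i, \sum_j P i j = 1).

Definition irreducible (P : 'M[R]_n.+1) : Prop :=
  forall i j, exists m : nat, 0 < (P ^+ m) i j.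

(* gcd {m >= 1 : P^m(i,i) > 0} = 1 for every state i *)
Definition aperiodic (P : 'M[R]_n.+1) : Prop :=
  forall i, forall d : nat,
    (forall m : nat, (0 < m)%N -> 0 < (P ^+ m) i i -> (d %| m)%N) -> d = 1%N.

Definition is_stationary (P : 'M[R]_n.+1) (p : 'rV[R]_n.+1) : Prop :=
  is_distribution p /\ p *m P = p.

Definition tv (mu nu : 'rV[R]_n.+1) : R :=
  2^-1 * \sum_i `|mu 0 i - nu 0 i|.

Definition Pt (P0 P1 : 'M[R]_n.+1) (t : R) : 'M[R]_n.+1 :=
  (1 - t) *: P0 + t *: P1.

(* t_mix(P, eps) = inf { T in N (T >= 1) : forall nu, ||nu P^T - pi||_TV <= eps },
   as an extended real (+oo if the set is empty). *)
Definition tmix_of (P : 'M[R]_n.+1) (pi : 'rV[R]_n.+1) (eps : R) : \bar R :=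
  ereal_inf [set (T%:R)%:E | T in
    [set T : nat | (1 <= T)%N /\
       forall nu, is_distribution nu -> tv (nu *m P ^+ T) pi <= eps]].

Definition tmix (P0 P1 : 'M[R]_n.+1) (pi : R -> 'rV[R]_n.+1) (eps : R) : \bar R :=
  ereal_sup [set tmix_of (Pt P0 P1 s) (pi s) eps | s in [set s : R | 0 <= s <= 1]].

Definition Pprod (P0 P1 : 'M[R]_n.+1) (T k : nat) : 'M[R]_n.+1 :=
  \prod_(i < k) Pt P0 P1 (i.+1%:R / T%:R).

Definition tsad (P0 P1 : 'M[R]_n.+1) (pi : R -> 'rV[R]_n.+1) (eps : R) : \bar R :=
  ereal_inf [set (T%:R)%:E | T in
    [set T : nat | (1 <= T)%N /\
       forall k : nat, (1 <= k <= T)%N ->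
         tv (pi 0 *m Pprod P0 P1 T k) (pi (k%:R / T%:R)) < eps]].

End MarkovDefs.

(* Main.v *)
Require Import Defs.
From HB Require Import structures.
From mathcomp Require Import all_boot all_order all_algebra.
From mathcomp Require Import all_classical all_reals.
From mathcomp Require Import ereal.
From mathcomp Require Import ring lra zify.
Import Order.TTheory GRing.Theory Num.Theory.
Set Implicit Arguments. Unset Strict Implicit.
Local Open Scope ring_scope.

Section Helpers.
Variable R : realType.
Variable n : nat.
Implicit Types (x y z : 'rV[R]_n.+1) (P Q : 'M[R]_n.+1).

Definition nrm (v : 'rV[R]_n.+1) : R := \sum_i `|v 0 i|.

Lemma tvE x y : tv x y = 2^-1 * nrm (x - y).
Proof. by rewrite /tv /nrm; congr (_ * _); apply: eq_bigr => i _; rewrite !mxE. Qed.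

Lemma nrm_ge0 v : 0 <= nrm v.
Proof. by apply: sumr_ge0 => i _. Qed.

Lemma nrmD u v : nrm (u + v) <= nrm u + nrm v.
Proof.
rewrite /nrm -big_split /=; apply: ler_sum => i _; rewrite mxE; exact: ler_normD.
Qed.

Lemma nrmZ a v : nrm (a *: v) = `|a| * nrm v.
Proof. rewrite /nrm mulr_sumr; apply: eq_bigr => i _; by rewrite mxE normrM. Qed.

Lemma nrm_mulmx v P : is_transition P -> nrm (v *m P) <= nrm v.
Proof.
move=> [P0 P1]; rewrite /nrm.
apply: (@le_trans _ _ (\sum_j \sum_i `|v 0 i| * P i j)).
  apply: ler_sum => j _; rewrite mxE; apply: le_trans (ler_norm_sum _ _ _) _.
  apply: ler_sum => i _; rewrite normrM (ger0_norm (P0 i j)) //.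
rewrite exchange_big /=; apply: ler_sum => i _.
by rewrite -mulr_sumr P1 mulr1.
Qed.

Lemma tv_ge0 x y : 0 <= tv x y.
Proof. rewrite tvE; apply: mulr_ge0 => //; exact: nrm_ge0. Qed.

Lemma tv_tri x y z : tv x z <= tv x y + tv y z.
Proof.
rewrite !tvE -mulrDr ler_wpM2l //.
have -> : x - z = (x - y) + (y - z) by rewrite addrA subrK.
exact: nrmD.
Qed.

Lemma tv_mulmx x y P : is_transition P -> tv (x *m P) (y *m P) <= tv x y.
Proof.
move=> tP; rewrite !tvE ler_wpM2l // -mulmxBl; exact: nrm_mulmx.
Qed.

Lemma dist_mulmx x P : is_distribution x -> is_transition P ->
  is_distribution (x *m P).
Proof.
move=> [x0 x1] [P0 P1]; split.
  move=> j; rewrite mxE; apply: sumr_ge0 => i _; exact: mulr_ge0.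
under eq_bigr do rewrite mxE.
rewrite exchange_big /= -x1; apply: eq_bigr => i _.
by rewrite -mulr_sumr P1 mulr1.
Qed.

Lemma tv_dist_le1 x y : is_distribution x -> is_distribution y -> tv x y <= 1.
Proof.
move=> [x0 x1] [y0 y1]; rewrite /tv.
have : \sum_i `|x 0 i - y 0 i| <= \sum_i (x 0 i + y 0 i).
  apply: ler_sum => i _; apply: le_trans (ler_normB _ _) _.
  by rewrite !ger0_norm.
rewrite big_split /= x1 y1 => h.
have h2 : 0 <= \sum_i `|x 0 i - y 0 i| by apply: sumr_ge0.
lra.
Qed.

Variables P0 P1 : 'M[R]_n.+1.
Hypothesis tP0 : is_transition P0.
Hypothesis tP1 : is_transition P1.

Lemma Pt_trans t : 0 <= t <= 1 -> is_transition (Pt P0 P1 t).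
Proof.
move=> /andP[t0 t1]; case: tP0 => a0 b0; case: tP1 => a1 b1; split.
  move=> i j; rewrite !mxE; apply: addr_ge0; apply: mulr_ge0 => //; lra.
move=> i; under eq_bigr do rewrite !mxE.
rewrite big_split /= -!mulr_sumr b0 b1; lra.
Qed.

Lemma Pt_diff a b : Pt P0 P1 a - Pt P0 P1 b = (a - b) *: (P1 - P0).
Proof. apply/matrixP => i j; rewrite !mxE; ring. Qed.

Lemma tv_Pt s a b : is_distribution s ->
  tv (s *m Pt P0 P1 a) (s *m Pt P0 P1 b) <= `|a - b|.
Proof.
move=> ds; rewrite tvE -mulmxBr Pt_diff -scalemxAr nrmZ mulmxBr.
have := tv_dist_le1 (dist_mulmx ds tP1) (dist_mulmx ds tP0).
rewrite tvE => h.
have h0 := nrm_ge0 (s *m P1 - s *m P0).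
have ha : 0 <= `|a - b| by [].
rewrite mulrCA; rewrite -[X in _ <= X]mulr1; apply: ler_wpM2l => //.
Qed.

Lemma dist_prod sg ts : is_distribution sg -> (forall t, t \in ts -> 0 <= t <= 1) ->
  is_distribution (sg *m \prod_(t <- ts) Pt P0 P1 t).
Proof.
move=> ds; elim/last_ind: ts => [|ts x IH] H.
  by rewrite big_nil mulmx1.
rewrite big_rcons /= -mulmxE mulmxA; apply: dist_mulmx.
  by apply: IH => t tin; apply: H; rewrite mem_rcons inE tin orbT.
by apply: Pt_trans; apply: H; rewrite mem_rcons inE eqxx.
Qed.

Lemma tv_prod sg ts s d : is_distribution sg -> 0 <= s <= 1 ->
  (forall t, t \in ts -> 0 <= t <= 1 /\ `|t - s| <= d) ->
  tv (sg *m \prod_(t <- ts) Pt P0 P1 t) (sg *m (Pt P0 P1 s) ^+ (size ts))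
    <= (size ts)%:R * d.
Proof.
move=> ds s01; elim/last_ind: ts => [|ts x IH] H.
  rewrite big_nil expr0 mulmx1 mul0r tvE subrr /nrm.
  by rewrite big1 ?mulr0 // => i _; rewrite mxE normr0.
have H' : forall t, t \in ts -> 0 <= t <= 1 /\ `|t - s| <= d.
  by move=> t tin; apply: H; rewrite mem_rcons inE tin orbT.
have [x01 xd] : 0 <= x <= 1 /\ `|x - s| <= d by apply: H; rewrite mem_rcons inE eqxx.
rewrite big_rcons /= size_rcons exprSr -!mulmxE !mulmxA.
set A := sg *m _; set B := sg *m _.
have dA : is_distribution A by apply: dist_prod => // t /H' [].
apply: le_trans (tv_tri _ (A *m Pt P0 P1 s) _) _.
rewrite -natr1 mulrDl mul1r [X in _ <= X]addrC; apply: lerD.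
  by apply: le_trans (tv_Pt _ _ dA) xd.
apply: le_trans (tv_mulmx _ _ (Pt_trans s01)) _; exact: IH.
Qed.

Lemma prod_nseq m (a : R) : \prod_(t <- nseq m a) Pt P0 P1 t = (Pt P0 P1 a) ^+ m.
Proof. by elim: m => [|m IH]; rewrite ?big_nil ?expr0 // big_cons IH exprS. Qed.

End Helpers.

Lemma stat_pow (R : realType) n (p : 'rV[R]_n.+1) (P : 'M[R]_n.+1) m :
  p *m P = p -> p *m P ^+ m = p.
Proof.
move=> h; elim: m => [|m IH]; first by rewrite expr0 mulmx1.
by rewrite exprSr -mulmxE mulmxA IH h.
Qed.

Lemma close (R : realType) (a b c T : nat) : (0 < T)%N -> (a <= b)%N -> (b <= a + c)%N ->
  `|a%:R / T%:R - b%:R / T%:R| <= c%:R / T%:R :> R.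
Proof.
move=> T0 ab bac.
have Tp : 0 < T%:R :> R by rewrite ltr0n.
have Ti : 0 < (T%:R : R)^-1 by rewrite invr_gt0.
rewrite -mulrBl normrM (ger0_norm (ltW Ti)).
rewrite ler_pM2r ?invr_gt0 //.
have h1 : a%:R <= b%:R :> R by rewrite ler_nat.
have h2 : b%:R <= a%:R + c%:R :> R by rewrite -natrD ler_nat.
rewrite ler_norml; apply/andP; split; lra.
Qed.

Lemma frac01 (R : realType) (a T : nat) : (0 < T)%N -> (a <= T)%N ->
  0 <= (a%:R / T%:R : R) <= 1.
Proof.
move=> T0 aT; have Tp : 0 < T%:R :> R by rewrite ltr0n.
apply/andP; split; first by apply: divr_ge0.
by rewrite ler_pdivrMr // mul1r ler_nat.
Qed.

Lemma decomp (R : realType) n (P0 P1 : 'M[R]_n.+1) (pi : R -> 'rV[R]_n.+1) M T k :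
  is_transition P0 -> is_transition P1 ->
  (forall s : R, 0 <= s <= 1 -> is_stationary (Pt P0 P1 s) (pi s)) ->
  (0 < T)%N -> (k <= T)%N ->
  exists rho ts, [/\ is_distribution rho, size ts = M,
    (forall t, t \in ts -> 0 <= t <= 1 /\ `|t - k%:R / T%:R| <= M%:R / T%:R) &
    pi 0 *m Pprod P0 P1 T k = rho *m \prod_(t <- ts) Pt P0 P1 t].
Proof.
move=> tP0 tP1 st T0 kT.
have [d0 s0] : is_stationary (Pt P0 P1 0) (pi 0) by apply: st; rewrite lexx ler01.
have PE : forall a, (a <= k)%N -> Pprod P0 P1 T k =
    \prod_(0 <= i < a) Pt P0 P1 (i.+1%:R / T%:R)
    * \prod_(t <- map (fun i : nat => i.+1%:R / T%:R) (iota a (k - a)%N)) Pt P0 P1 t.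
  move=> a ak; rewrite /Pprod -(big_mkord xpredT (fun i : nat => Pt P0 P1 (i.+1%:R / T%:R))).
  by rewrite (big_cat_nat (leq0n a) ak) /= big_map.
have Hf : forall i : nat, (i < k)%N -> (k <= i.+1 + M)%N ->
    0 <= (i.+1%:R / T%:R : R) <= 1 /\ `|(i.+1%:R / T%:R : R) - k%:R / T%:R| <= M%:R / T%:R.
  move=> i ik kiM; split; first by apply: frac01 => //; apply: leq_trans kT.
  by apply: close.
case: (leqP M k) => Mk.
- exists (pi 0 *m Pprod P0 P1 T (k - M)%N),
    (map (fun i : nat => i.+1%:R / T%:R) (iota (k - M)%N (k - (k - M))%N)); split.
  + rewrite /Pprod -(big_mkord xpredT (fun i : nat => Pt P0 P1 (i.+1%:R / T%:R))).
    rewrite (_ : \prod_(0 <= i < k - M) _ = \prod_(t <- map (fun i : nat => i.+1%:R / T%:R) (iota 0 (k - M)%N)) Pt P0 P1 t); last first.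
      by rewrite big_map /index_iota subn0.
    apply: dist_prod => //.
    move=> t /mapP [i]; rewrite mem_iota add0n => /andP [_ ik] ->.
    apply: frac01 => //; apply: leq_trans ik _; apply: leq_trans (leq_subr _ _) kT.
  + by rewrite size_map size_iota subKn.
  + move=> t /mapP [i]; rewrite mem_iota subnKC ?leq_subr // => /andP [ki ik] ->.
    apply: Hf => //; lia.
  + rewrite (PE (k - M)%N) ?leq_subr // -mulmxE mulmxA; congr (_ *m _ *m _).
    by rewrite /Pprod -(big_mkord xpredT (fun i : nat => Pt P0 P1 (i.+1%:R / T%:R))).
- exists (pi 0), (nseq (M - k)%N 0 ++ map (fun i : nat => i.+1%:R / T%:R) (iota 0 (k - 0)%N)); split => //.
  + by rewrite size_cat size_nseq size_map size_iota subn0 subnK // ltnW.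
  + move=> t; rewrite mem_cat => /orP [].
      rewrite mem_nseq => /andP [_ /eqP ->]; split; first by rewrite lexx ler01.
      rewrite -(mul0r (T%:R : R)^-1) -[0 : R]/(0%:R); apply: close => //.
      exact: ltnW.
    move=> /mapP [i]; rewrite mem_iota add0n => /andP [_ ik] ->.
    apply: Hf => //; lia.
  + rewrite (PE 0%N) // big_geq // mul1r big_cat /= prod_nseq -mulmxE mulmxA.
    by rewrite stat_pow.
Qed.

Lemma core (R : realType) n (P0 P1 : 'M[R]_n.+1) (pi : R -> 'rV[R]_n.+1) M T (eps : R) :
  is_transition P0 -> is_transition P1 ->
  (forall s : R, 0 <= s <= 1 -> is_stationary (Pt P0 P1 s) (pi s)) ->
  (0 < T)%N ->
  (forall s : R, 0 <= s <= 1 -> forall nu, is_distribution nu ->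
      tv (nu *m (Pt P0 P1 s) ^+ M) (pi s) <= eps / 2) ->
  M%:R * (M%:R / T%:R) < eps / 2 ->
  forall k, (k <= T)%N -> tv (pi 0 *m Pprod P0 P1 T k) (pi (k%:R / T%:R)) < eps.
Proof.
move=> tP0 tP1 st T0 mix small k kT.
have [rho [ts [drho sts Hts ->]]] := decomp M tP0 tP1 st T0 kT.
have s01 := frac01 R T0 kT.
apply: le_lt_trans (tv_tri _ (rho *m (Pt P0 P1 (k%:R / T%:R)) ^+ M) _) _.
have h1 := tv_prod tP0 tP1 drho s01 Hts; rewrite sts in h1.
have h2 := mix _ s01 _ drho.
lra.
Qed.

Lemma dist_pow (R : realType) n (P : 'M[R]_n.+1) nu m :
  is_transition P -> is_distribution nu -> is_distribution (nu *m P ^+ m).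
Proof.
move=> tP dn; elim: m => [|m IH]; first by rewrite expr0 mulmx1.
by rewrite exprSr -mulmxE mulmxA; apply: dist_mulmx.
Qed.

Lemma tmix_of_ge1 (R : realType) n (P : 'M[R]_n.+1) p e : (1%:E <= tmix_of P p e)%E.
Proof.
apply/ereal_infP => y [T [T1 _] <-]; by rewrite lee_fin ler1n.
Qed.

Lemma final_ineq (R : realType) (Tn M : nat) (x eps : R) :
  0 < eps < 1 -> (1 <= M)%N -> M%:R <= x ->
  Tn%:R <= 2 * M%:R ^+ 2 / eps + 1 ->
  Tn%:R <= 3 * (x * x * x * x) * eps ^- 3.
Proof.
move=> /andP [e0 e1] M1 Mx HT.
have M1' : 1 <= M%:R :> R by rewrite ler1n.
have E : eps ^- 3 = (eps^-1) ^+ 3 by rewrite exprVn.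
rewrite E; move: HT; rewrite -[_ / eps]/(_ * eps^-1).
have ie1 : 1 <= eps^-1 by rewrite invf_ge1 // ltW.
move: ie1; set ie := eps^-1 => ie1 HT.
have HT' : Tn%:R <= 2 * (M%:R * M%:R) * ie + 1 by rewrite -expr2.
have x1 : 1 <= x by lra.
have a1 : M%:R * M%:R <= x * x :> R by apply: ler_pM => //; lra.
have a2 : 1 <= x * x by nra.
have a : M%:R * M%:R <= x * x * x * x :> R by nra.
have b : ie <= ie ^+ 3.
  rewrite !exprS expr0 mulr1; have : 1 <= ie * ie by nra. nra.
have c : 1 <= M%:R * M%:R * ie :> R by nra.
have d : M%:R * M%:R * ie <= x * x * x * x * ie ^+ 3 :> R.
  apply: ler_pM => //; nra.
nra.
Qed.

Theorem theorem3 (R : realType) (n : nat) (P0 P1 : 'M[R]_n.+1)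
    (pi : R -> 'rV[R]_n.+1) :
  is_transition P0 -> irreducible P0 -> aperiodic P0 ->
  is_transition P1 -> irreducible P1 -> aperiodic P1 ->
  (forall s : R, 0 <= s <= 1 -> is_stationary (Pt P0 P1 s) (pi s)) ->
  exists C : R, 0 < C /\ exists eps0 : R, 0 < eps0 /\
    forall eps : R, 0 < eps < eps0 ->
      (tsad P0 P1 pi eps <=
        C%:E * (tmix P0 P1 pi (eps / 2) * tmix P0 P1 pi (eps / 2)
                * tmix P0 P1 pi (eps / 2) * tmix P0 P1 pi (eps / 2))
        * (eps ^- 3)%:E)%E.
Proof.
move=> tP0 _ _ tP1 _ _ st.
exists 3; split => //; exists 1; split => // eps /andP [e0 e1].
have ub : forall s : R, 0 <= s <= 1 ->
    (tmix_of (Pt P0 P1 s) (pi s) (eps / 2) <= tmix P0 P1 pi (eps / 2))%E.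
  move=> s s01; have := lexx (tmix P0 P1 pi (eps / 2)).
  rewrite {1}/tmix => /ereal_supP; apply; by exists s.
have s0 : 0 <= (0:R) <= 1 by apply/andP; split; lra.
have ge1 : (1%:E <= tmix P0 P1 pi (eps / 2))%E.
  exact: le_trans (tmix_of_ge1 (Pt P0 P1 0) (pi 0) (eps / 2)) (ub 0 s0).
have e3 : 0 < eps ^- 3 by rewrite invr_gt0 exprn_gt0.
move: ge1 ub; case: (tmix P0 P1 pi (eps / 2)) => [x| |] ge1 ub; last first.
- by [].
- by rewrite !mulyy mulry gtr0_sg // mul1e mulyr gtr0_sg // mul1e leey.
rewrite lee_fin in ge1.
set M := Num.trunc x.
have Mx : M%:R <= x by rewrite truncn_le; lra.
have xM : x < M.+1%:R by apply: real_truncnS_gt; rewrite ger0_real //; lra.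
have mix : forall s : R, 0 <= s <= 1 -> forall nu, is_distribution nu ->
    tv (nu *m (Pt P0 P1 s) ^+ M) (pi s) <= eps / 2.
  move=> s s01 nu dnu.
  have h : (tmix_of (Pt P0 P1 s) (pi s) (eps / 2) < (M.+1%:R)%:E)%E.
    by apply: le_lt_trans (ub s s01) _; rewrite lte_fin.
  have [y [T [T1 HT] <-] ]:= ereal_inf_lt h.
  rewrite lte_fin ltr_nat ltnS => TM.
  rewrite -(subnK TM) exprD -mulmxE mulmxA; apply: HT.
  apply: dist_pow => //; exact: Pt_trans.
have M1 : (1 <= M)%N by rewrite /M truncn_gt_nat.
set K : R := 2 * M%:R ^+ 2 / eps.
have K0 : 0 <= K by rewrite /K; apply: divr_ge0; [apply: mulr_ge0 => //; apply: exprn_ge0 | apply: ltW].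
set Tn := (Num.trunc K).+1.
have HT1 : K < Tn%:R by apply: real_truncnS_gt; rewrite ger0_real.
have HT2 : Tn%:R <= K + 1 by rewrite /Tn -natr1 lerD2r truncn_le.
have Tn0 : (0 < Tn)%N by [].
have Tnp : 0 < Tn%:R :> R by rewrite ltr0n.
have small : M%:R * (M%:R / Tn%:R) < eps / 2.
  rewrite mulrA ltr_pdivrMr //.
  move: HT1; rewrite /K ltr_pdivrMr // expr2 => h; lra.
apply: (@le_trans _ _ (Tn%:R)%:E).
  apply: ge_ereal_inf; exists (Tn%:R)%:E => //; exists Tn => //; split => //.
  move=> k /andP [_ kT]; exact: (core tP0 tP1 st Tn0 mix small).
rewrite -!EFinM lee_fin; apply: (@final_ineq R Tn M x eps) => //; first by rewrite e0 e1.
Qed.
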